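(* Let $\|\cdot\|=\|\cdot\|_2$, and let $d_*>0$, $a<d_*$, $\bar D>0$. Then $$\kappa(a,d_*,\bar D)\le\sqrt{\max\Big\{1-\frac{(d_*-a)^2}{4\bar D^2},\ \frac{d_*+a}{2d_*}\Big\}},$$ where $\kappa(a,d_*,\bar D):=\max\{\min_{\beta\in[0,1]}\|w-\beta z\|_2:\ \|w\|_2=1,\ w^\top z\ge(1-a/d_* )/2,\ \|z\|_2\le\bar D/d_*\}$.
   Context: For the $\ell_2$-norm, $\nabla\|w\|_2=w$ when $\|w\|_2=1$, so the general definition $\kappa(a,d_*,\bar D)=\max_{\|w\|=1,\ \nabla\|w\|^\top z\ge(1-a/d_* )/2,\ \|z\|_2\le\bar D/d_*}\min_{\beta\in[0,1]}\|w-\beta z\|$ reduces to the one stated. *)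

(* Defs.v *)
From HB Require Import structures.
From mathcomp Require Import all_boot all_order all_algebra.
From mathcomp Require Import boolp classical_sets reals.
Set Implicit Arguments. Unset Strict Implicit. Unset Printing Implicit Defensive.
Import Order.TTheory GRing.Theory Num.Theory.
Local Open Scope ring_scope.
Local Open Scope classical_set_scope.

Section Kappa.
Variable R : realType.

Definition dotv (n : nat) (u v : 'rV[R]_n) : R := \sum_(i < n) u 0 i * v 0 i.

Definition norm2 (n : nat) (u : 'rV[R]_n) : R := Num.sqrt (dotv u u).

(* min_{beta in [0,1]} ||w - beta z||_2 (written as an infimum; it is attained). *)
Definition segdist (n : nat) (w z : 'rV[R]_n) : R :=
  inf [set norm2 (w - b *: z) | b in [set b : R | (0 <= b)%R && (b <= 1)%R]].

Definition kappa_feasible (n : nat) (a ds Db : R) (w z : 'rV[R]_n) : Prop :=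
  [/\ norm2 w = 1, (1 - a / ds) / 2 <= dotv w z & norm2 z <= Db / ds].

Definition kappa (n : nat) (a ds Db : R) : R :=
  sup [set segdist wz.1 wz.2 | wz in [set wz : 'rV[R]_n * 'rV[R]_n |
        kappa_feasible a ds Db wz.1 wz.2]].

End Kappa.

(* Main.v *)
Require Import Defs.
From HB Require Import structures.
From mathcomp Require Import all_boot all_order all_algebra.
From mathcomp Require Import boolp classical_sets reals.
From mathcomp Require Import ring lra.
Import Order.TTheory GRing.Theory Num.Theory.
Local Open Scope ring_scope.
Local Open Scope classical_set_scope.

Lemma dot_exp (R : realType) n (w z : 'rV[R]_n) b :
  dotv (w - b *: z) (w - b *: z) = dotv w w - 2 * b * dotv w z + b ^+ 2 * dotv z z.
Proof.
rewrite /dotv.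
under eq_bigr => i _ do rewrite !mxE.
rewrite !mulr_sumr -sumrB -big_split /=.
by apply: eq_bigr => i _; ring.
Qed.

Lemma dot_ge0 (R : realType) n (z : 'rV[R]_n) : 0 <= dotv z z.
Proof. by apply: sumr_ge0 => i _; rewrite -expr2 sqr_ge0. Qed.

Lemma key (R : realType) (c s t D2 : R) :
  0 < t -> t <= c -> 0 <= s -> s <= D2 ->
  exists2 b, 0 <= b <= 1 &
    1 - 2 * b * c + b ^+ 2 * s <= Num.max (1 - t ^+ 2 / D2) (1 - t).
Proof.
move=> t0 tc s0 sD.
have c0 : 0 < c by lra.
have [sc|cs] := leP s c.
  exists 1; first by rewrite ler01 lexx.
  rewrite le_max; apply/orP; right; lra.
have s0' : 0 < s by lra.
exists (c / s).
  apply/andP; split; first by rewrite divr_ge0 ?ltW.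
  by rewrite ler_pdivrMr // mul1r ltW.
rewrite le_max; apply/orP; left.
have -> : 1 - 2 * (c / s) * c + (c / s) ^+ 2 * s = 1 - c ^+ 2 / s by field; lra.
rewrite lerD2l lerN2.
have D0 : 0 < D2 by lra.
apply: (@le_trans _ _ (t ^+ 2 / s)).
  rewrite ler_pdivrMr // mulrAC ler_pdivlMr //.
  by rewrite ler_pM2l ?exprn_gt0.
rewrite ler_pM2r ?invr_gt0 //.
by rewrite ler_sqr ?nnegrE // ltW.
Qed.

Theorem mainTheorem8 (R : realType) (n : nat) (a ds Db : R) :
  0 < ds -> a < ds -> 0 < Db ->
  kappa n a ds Db <=
    Num.sqrt (Num.max (1 - (ds - a) ^+ 2 / (4 * Db ^+ 2)) ((ds + a) / (2 * ds))).
Proof.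
move=> ds0 ads Db0.
set M := Num.sqrt _.
set t := (1 - a / ds) / 2.
have t0 : 0 < t.
  have : a / ds < 1 by rewrite ltr_pdivrMr // mul1r.
  rewrite /t; lra.
have e1 : 1 - t ^+ 2 / (Db / ds) ^+ 2 = 1 - (ds - a) ^+ 2 / (4 * Db ^+ 2).
  rewrite /t; field; rewrite ?gt_eqF //.
have e2 : 1 - t = (ds + a) / (2 * ds).
  rewrite /t; field; rewrite ?gt_eqF //.
have H : forall w z : 'rV[R]_n, kappa_feasible a ds Db w z -> segdist w z <= M.
  move=> w z [nw dwz nz].
  have ww : dotv w w = 1.
    by rewrite -(sqr_sqrtr (dot_ge0 _ _ w)) -/(norm2 w) nw expr1n.
  have zz : dotv z z <= (Db / ds) ^+ 2.
    have Dp : 0 <= Db / ds by rewrite divr_ge0 // ltW.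
    by rewrite -ler_sqrt ?sqrtr_sqr ?ger0_norm ?exprn_ge0.
  have [b /andP[b0 b1] Hb] := @key R _ _ _ _ t0 dwz (dot_ge0 _ _ z) zz.
  rewrite /segdist.
  apply: le_trans (ge_inf _ _) _.
  - exists 0 => x [b' _ <-]; exact: sqrtr_ge0.
  - by exists b; first by rewrite /= b0 b1.
  rewrite /norm2 /M ler_wsqrtr // dot_exp ww -e1 -e2.
  exact: Hb.
rewrite /kappa.
set E := [set _ | _ in _].
have [ne|e0] := pselect (E !=set0).
  apply: ge_sup ne _ => x [wz Fwz <-]; exact: H.
have -> : E = set0 by apply/seteqP; split=> x // Ex; apply: e0; exists x.
by rewrite sup0 sqrtr_ge0.
Qed.
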